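(* Let $A_1,\dots,A_{20}$ be the vertices of a regular dodecahedron in $\mathbb R^3$ with centre $O$, and let $\Gamma$ be any sphere centred at $O$ (of positive radius). There are at most nine real numbers $\lambda$ for which the function $M\mapsto\sum_{i=1}^{20}|MA_i|^{\lambda}$ is constant on $\Gamma\setminus\{A_1,\dots,A_{20}\}$.
   Context: $|MA|$ denotes Euclidean distance. *)

(* Defs.v *)
From Stdlib Require Import Reals List.
Import ListNotations.
Open Scope R_scope.

Definition point : Type := (R * R * R)%type.

Definition pt (x y z : R) : point := (x, y, z).

Definition dist (P Q : point) : R :=
  let '(x1, y1, z1) := P in
  let '(x2, y2, z2) := Q in
  sqrt ((x1 - x2) ^ 2 + (y1 - y2) ^ 2 + (z1 - z2) ^ 2).

Definition origin : point := pt 0 0 0.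

Definition scale (s : R) (P : point) : point :=
  let '(x, y, z) := P in pt (s * x) (s * y) (s * z).

Definition phi : R := (1 + sqrt 5) / 2.

Definition std_dodeca : list point :=
  [ pt 1 1 1; pt 1 1 (-1); pt 1 (-1) 1; pt 1 (-1) (-1);
    pt (-1) 1 1; pt (-1) 1 (-1); pt (-1) (-1) 1; pt (-1) (-1) (-1);
    pt 0 (/ phi) phi; pt 0 (/ phi) (- phi); pt 0 (- / phi) phi; pt 0 (- / phi) (- phi);
    pt (/ phi) phi 0; pt (/ phi) (- phi) 0; pt (- / phi) phi 0; pt (- / phi) (- phi) 0;
    pt phi 0 (/ phi); pt phi 0 (- / phi); pt (- phi) 0 (/ phi); pt (- phi) 0 (- / phi) ].

Definition isometry (f : point -> point) : Prop :=
  forall P Q, dist (f P) (f Q) = dist P Q.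

(* Every regular dodecahedron in R^3 is the image of the scaled standard one
   under an isometry; its vertices and centre: *)
Definition dodeca_vertices (f : point -> point) (s : R) : list point :=
  map (fun v => f (scale s v)) std_dodeca.

Definition dodeca_centre (f : point -> point) : point := f origin.

Fixpoint sumR (l : list R) : R :=
  match l with [] => 0 | x :: t => x + sumR t end.

Definition power_sum (A : list point) (lam : R) (M : point) : R :=
  sumR (map (fun P => Rpower (dist M P) lam) A).

Definition const_on_sphere_minus (A : list point) (O : point) (rho lam : R) : Prop :=
  exists c : R, forall M : point,
    dist M O = rho -> ~ In M A -> power_sum A lam M = c.

(* Main.v *)
Require Import Defs.
From Stdlib Require Import Reals List Lra Lia Nsatz.
Import ListNotations.
Import Defs.
Open Scope R_scope.


Definition Z (f : R -> R) (n : nat) : Prop :=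
  exists L, NoDup L /\ length L = n /\ forall x, In x L -> f x = 0.

Lemma list_max (L : list R) : L <> nil -> exists m, In m L /\ forall x, In x L -> x <= m.
Proof.
  induction L as [|a L IH]; intros H; [congruence|].
  destruct L as [|b L].
  - exists a; split; [left; auto|]. intros x [<-|[]]; lra.
  - destruct IH as [m [Hm Hx]]; [discriminate|].
    destruct (Rle_dec a m).
    + exists m; split; [right; auto|]. intros x [<-|Hx']; auto.
    + exists a; split; [left; auto|]. intros x [<-|Hx']; [lra|]. specialize (Hx x Hx'); lra.
Qed.

Lemma rolle_strong (f g : R -> R) :
  (forall x, derivable_pt_lim f x (g x)) ->
  forall n L, NoDup L -> length L = S n -> (forall x, In x L -> f x = 0) ->
  exists L', NoDup L' /\ length L' = n /\ (forall y, In y L' -> g y = 0) /\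
    (forall y, In y L' -> exists x, In x L /\ y < x).
Proof.
  intros Hd n. induction n as [|n IH]; intros L HN HL Hz.
  - exists nil; split; [constructor|]; split; [reflexivity|]; split; intros y [].
  - destruct (list_max L) as [m [Hm Hmax]]. { intros ->; discriminate. }
    destruct (in_split m L Hm) as [L1 [L2 ->]].
    pose proof (NoDup_remove_1 _ _ _ HN) as HN0.
    pose proof (NoDup_remove_2 _ _ _ HN) as Hnm.
    assert (HL0 : length (L1 ++ L2) = S n).
    { rewrite length_app in *; simpl in HL; lia. }
    assert (Hz0 : forall x, In x (L1 ++ L2) -> f x = 0).
    { intros x Hx; apply Hz. apply in_app_or in Hx; apply in_or_app; simpl; tauto. }
    destruct (IH _ HN0 HL0 Hz0) as [L0' [HN' [HL' [Hz' Hb']]]].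
    destruct (list_max (L1 ++ L2)) as [m0 [Hm0 Hmax0]]. { intros E; rewrite E in HL0; discriminate. }
    assert (Hm0L : In m0 (L1 ++ m :: L2)).
    { apply in_app_or in Hm0; apply in_or_app; simpl; tauto. }
    assert (Hlt : m0 < m).
    { destruct (Rle_lt_or_eq_dec _ _ (Hmax m0 Hm0L)) as [h|h]; auto. subst; contradiction. }
    destruct (MVT_cor2 f g m0 m Hlt (fun c _ => Hd c)) as [z [Hze Hzb]].
    rewrite (Hz m0 Hm0L), (Hz m Hm) in Hze.
    assert (Hgz : g z = 0).
    { assert (g z * (m - m0) = 0) by lra.
      destruct (Rmult_integral _ _ H); [auto|lra]. }
    exists (z :: L0'); repeat split.
    + constructor; auto. intros Hin. destruct (Hb' z Hin) as [x [Hx Hzx]].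
      specialize (Hmax0 x Hx); lra.
    + simpl; lia.
    + intros y [<-|Hy]; auto.
    + intros y [<-|Hy].
      * exists m; split; [apply in_or_app; simpl; tauto| lra].
      * destruct (Hb' y Hy) as [x [Hx Hyx]]. exists x; split; auto.
        apply in_app_or in Hx; apply in_or_app; simpl; tauto.
Qed.

Lemma rolle_count (f g : R -> R) n :
  (forall x, derivable_pt_lim f x (g x)) -> Z f (S n) -> Z g n.
Proof.
  intros Hd [L [HN [HL Hz]]].
  destruct (rolle_strong f g Hd n L HN HL Hz) as [L' [? [? [? _]]]].
  exists L'; auto.
Qed.

Lemma sub_list (L : list R) m : NoDup L -> (m <= length L)%nat ->
  exists L', NoDup L' /\ length L' = m /\ incl L' L.
Proof.
  revert m; induction L as [|a L IH]; intros m HN Hm.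
  - simpl in Hm. assert (m = 0%nat) by lia; subst. exists nil; split; [constructor|split; [reflexivity|intros x []]].
  - inversion HN; subst. destruct m as [|m].
    + exists nil; split; [constructor|split; [reflexivity|intros x []]].
    + destruct (IH m) as [L' [HN' [HL' Hi]]]; auto. simpl in Hm; lia.
      exists (a :: L'); split; [constructor; auto|split; [simpl; lia|]].
      intros x [<-|Hx]; [left; auto|right; auto].
Qed.

Lemma Z_sub (f : R -> R) m L : NoDup L -> (m <= length L)%nat -> (forall x, In x L -> f x = 0) -> Z f m.
Proof.
  intros HN Hm Hz. destruct (sub_list L m HN Hm) as [L' [? [? Hi]]].
  exists L'; repeat split; auto.
Qed.

Fixpoint E (l : list (R*R)) (x : R) : R :=
  match l with nil => 0 | (c,t) :: l' => c * exp (t * x) + E l' x end.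

Definition shift (a : R) (l : list (R*R)) := map (fun p => (fst p, snd p - a)) l.
Definition dmap (l : list (R*R)) := map (fun p => (fst p * snd p, snd p)) l.

Lemma E_shift a l x : E (shift a l) x = exp (- a * x) * E l x.
Proof.
  induction l as [|[c t] l IH]; simpl; [ring|].
  rewrite IH. replace ((t - a) * x) with (t * x + - a * x) by ring.
  rewrite exp_plus; ring.
Qed.

Lemma lin_deriv t x : derivable_pt_lim (fun x => t * x) x t.
Proof.
  pose proof (derivable_pt_lim_scal id t x 1 (derivable_pt_lim_id x)) as H.
  rewrite Rmult_1_r in H. exact H.
Qed.

Lemma E_deriv l x : derivable_pt_lim (E l) x (E (dmap l) x).
Proof.
  induction l as [|[c t] l IH]; simpl.
  - apply derivable_pt_lim_const.
  - apply (derivable_pt_lim_plus (fun x => c * exp (t * x)) (E l)); auto.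
    replace (c * t * exp (t * x)) with (c * (exp (t * x) * t)) by ring.
    apply (derivable_pt_lim_scal (fun x => exp (t * x))).
    apply (derivable_pt_lim_comp (fun x => t * x) exp).
    + apply lin_deriv.
    + apply derivable_pt_lim_exp.
Qed.

Fixpoint var (l : list (R*R)) : nat :=
  match l with
  | (c,_) :: ((c',_) :: _) as l' => ((if Rlt_dec (c*c') 0 then 1 else 0) + var l')%nat
  | _ => 0%nat
  end.

Fixpoint incr (l : list (R*R)) : Prop :=
  match l with
  | (_,t) :: ((_,t') :: _) as l' => t < t' /\ incr l'
  | _ => True
  end.

Definition nz (l : list (R*R)) := forall p, In p l -> fst p <> 0.

Lemma var0_sign l c t : var ((c,t)::l) = 0%nat -> nz ((c,t)::l) -> forall x, c * E ((c,t)::l) x > 0.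
Proof.
  revert c t; induction l as [|[c' t'] l IH]; intros c t Hv Hn x.
  - simpl. assert (c <> 0) by (apply (Hn (c,t)); left; auto).
    pose proof (exp_pos (t*x)). replace (c * (c * exp (t * x) + 0)) with ((c*c) * exp (t*x)) by ring.
    apply Rmult_lt_0_compat; auto. nra.
  - assert (Hc : c <> 0) by (apply (Hn (c,t)); left; auto).
    assert (Hc' : c' <> 0) by (apply (Hn (c',t')); right; left; auto).
    simpl in Hv. destruct (Rlt_dec (c*c') 0); [lia|].
    assert (Hcc : c * c' > 0).
    { destruct (Rle_lt_or_eq_dec 0 (c*c')) as [h|h]; [lra|lra|]. symmetry in h.
      apply Rmult_integral in h; tauto. }
    assert (H1 := IH c' t' Hv (fun p Hp => Hn p (or_intror Hp)) x).
    change (c * (c * exp (t*x) + E ((c',t')::l) x) > 0).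
    pose proof (exp_pos (t*x)).
    assert (c * E ((c', t') :: l) x > 0).
    { assert (c * E ((c', t') :: l) x * (c * c') = (c*c) * (c' * E ((c', t') :: l) x)) by ring.
      assert (c * c > 0) by nra. nra. }
    nra.
Qed.

Lemma incr_head c t r : incr ((c,t)::r) -> forall p, In p r -> t < snd p.
Proof.
  revert c t; induction r as [|[c' t'] r IH]; intros c t H p Hp; [destruct Hp|].
  simpl in H. destruct H as [H1 H2]. destruct Hp as [<-|Hp]; simpl; auto.
  specialize (IH c' t' H2 p Hp); lra.
Qed.

Lemma incr_tail x r : incr (x :: r) -> incr r.
Proof. destruct x as [c t]; destruct r as [|[c' t'] r]; simpl; tauto. Qed.

Lemma incr_app l1 r : incr (l1 ++ r) -> incr r /\ forall p q, In p l1 -> In q r -> snd p < snd q.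
Proof.
  induction l1 as [|[c t] l1 IH]; intros H.
  - split; auto. intros p q [].
  - rewrite <- app_comm_cons in H. pose proof (incr_head c t _ H) as Hh. apply incr_tail in H.
    destruct (IH H) as [H1 H2]; split; auto.
    intros p q [<-|Hp] Hq; simpl; auto. apply Hh; apply in_or_app; auto.
Qed.

Lemma var_same l1 x r : (forall p, In p l1 -> fst p * fst x > 0) -> var (l1 ++ x :: r) = var (x :: r).
Proof.
  induction l1 as [|[c t] l1 IH]; intros H; [reflexivity|]. rewrite <- app_comm_cons.
  assert (Hc : c * fst x > 0) by (apply (H (c,t)); left; auto).
  rewrite <- IH by (intros p Hp; apply H; right; auto).
  destruct l1 as [|[c' t'] l1]; simpl.
  - destruct x as [cx tx]. simpl in Hc. destruct (Rlt_dec (c*cx) 0); [lra|]. reflexivity.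
  - assert (Hc' : c' * fst x > 0) by (apply (H (c',t')); right; left; auto).
    destruct (Rlt_dec (c*c') 0) as [h|h]; [|reflexivity]. exfalso.
    assert (fst x * fst x > 0) by nra. nra.
Qed.

Lemma first_split l : nz l -> (var l > 0)%nat -> exists l1 c1 t1 c2 t2 l2,
  l = l1 ++ (c1,t1)::(c2,t2)::l2 /\ (forall p, In p l1 -> fst p * c1 > 0) /\ c1 * c2 < 0 /\
  var l = S (var ((c2,t2)::l2)).
Proof.
  induction l as [|[c t] l IH]; intros Hn Hv; [simpl in Hv; lia|].
  destruct l as [|[c' t'] l]; [simpl in Hv; lia|].
  destruct (Rlt_dec (c*c') 0) as [h|h].
  - exists nil, c, t, c', t', l. split; [reflexivity|]. split; [intros p []|]. split; auto.
    simpl. destruct (Rlt_dec (c*c') 0); [reflexivity|contradiction].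
  - assert (Hv' : var ((c,t)::(c',t')::l) = var ((c',t')::l)).
    { simpl. destruct (Rlt_dec (c*c') 0); [contradiction|reflexivity]. }
    rewrite Hv' in Hv |- *.
    assert (Hc : c <> 0) by (apply (Hn (c,t)); left; auto).
    assert (Hc' : c' <> 0) by (apply (Hn (c',t')); right; left; auto).
    assert (Hcc : c * c' > 0).
    { destruct (Rle_lt_or_eq_dec 0 (c*c')) as [h1|h1]; [lra|lra|].
      symmetry in h1; apply Rmult_integral in h1; tauto. }
    destruct (IH (fun p Hp => Hn p (or_intror Hp)) Hv) as [l1 [c1 [t1 [c2 [t2 [l2 [He [Hs [Hc12 Hvv]]]]]]]]].
    exists ((c,t)::l1), c1, t1, c2, t2, l2. split; [rewrite He; reflexivity|].
    split; [|split; auto].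
    intros p [<-|Hp]; [|auto]. simpl.
    destruct l1 as [|p1 l1].
    + simpl in He. injection He; intros; subst. exact Hcc.
    + simpl in He. injection He; intros; subst.
      specialize (Hs (c',t') (or_introl eq_refl)). simpl in Hs.
      assert (c' * c' > 0) by nra. nra.
Qed.

Definition newl a l := dmap (shift a l).

Lemma var_pos a r : (forall p, In p r -> snd p > a) -> var (newl a r) = var r.
Proof.
  induction r as [|[c t] r IH]; intros H; [reflexivity|].
  destruct r as [|[c' t'] r]; [reflexivity|].
  assert (h1 : t > a) by (apply (H (c,t)); left; auto).
  assert (h2 : t' > a) by (apply (H (c',t')); right; left; auto).
  change (((if Rlt_dec (c * (t - a) * (c' * (t' - a))) 0 then 1 else 0) + var (newl a ((c',t')::r)))%nat
    = ((if Rlt_dec (c * c') 0 then 1 else 0) + var ((c',t')::r))%nat).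
  rewrite IH by (intros p Hp; apply H; right; auto).
  assert (e : c * (t - a) * (c' * (t' - a)) = (c*c') * ((t-a)*(t'-a))) by ring.
  assert (hp : (t-a)*(t'-a) > 0) by nra.
  destruct (Rlt_dec (c * (t - a) * (c' * (t' - a))) 0); destruct (Rlt_dec (c*c') 0); auto; exfalso; nra.
Qed.

Lemma incr_new a l : incr l -> incr (newl a l).
Proof.
  induction l as [|[c t] l IH]; intros H; [exact I|].
  destruct l as [|[c' t'] l]; [exact I|].
  destruct H as [H1 H2]. split; [simpl; lra|]. apply IH; exact H2.
Qed.

Lemma nz_new a l : nz l -> (forall p, In p l -> snd p <> a) -> nz (newl a l).
Proof.
  intros Hn Ha p Hp. unfold newl, dmap, shift in Hp. rewrite map_map in Hp.
  apply in_map_iff in Hp. destruct Hp as [[c t] [<- Hin]]. simpl.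
  specialize (Hn _ Hin); specialize (Ha _ Hin). simpl in *.
  intro E0. apply Rmult_integral in E0. destruct E0; [contradiction|]. apply Ha; lra.
Qed.

Lemma Z_shift a l n : Z (E l) n -> Z (E (shift a l)) n.
Proof.
  intros [L [H1 [H2 H3]]]. exists L; repeat split; auto.
  intros x Hx. rewrite E_shift, H3; auto; ring.
Qed.

Lemma var_cons2 c t c' t' r : var ((c,t)::(c',t')::r) =
  ((if Rlt_dec (c*c') 0 then 1 else 0) + var ((c',t')::r))%nat.
Proof. reflexivity. Qed.

Theorem descartes : forall v l, var l = v -> l <> nil -> incr l -> nz l -> ~ Z (E l) (S v).
Proof.
  induction v as [|v IH]; intros l Hv Hne Hi Hn HZ.
  - destruct l as [|[c t] l]; [congruence|].
    destruct HZ as [[|x L] [_ [HL Hz]]]; [discriminate|].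
    pose proof (var0_sign l c t Hv Hn x). rewrite (Hz x (or_introl eq_refl)) in H. lra.
  - destruct (first_split l Hn ltac:(lia)) as [l1 [c1 [t1 [c2 [t2 [l2 [He [Hs [Hc12 Hvv]]]]]]]]].
    rewrite He in Hi. destruct (incr_app _ _ Hi) as [Hir Hlt].
    assert (Ht12 : t1 < t2) by (destruct Hir; auto).
    assert (Hl1 : forall p, In p l1 -> snd p < t1).
    { intros p Hp. apply (Hlt p (c1,t1) Hp (or_introl eq_refl)). }
    assert (Hr : forall p, In p ((c2,t2)::l2) -> snd p >= t2).
    { intros p [<-|Hp]; simpl; [lra|]. apply incr_tail in Hir.
      pose proof (incr_head c2 t2 l2 Hir p Hp). lra. }
    set (a := (t1 + t2) / 2).
    assert (Hvn : var (newl a l) = v).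
    { rewrite He. unfold newl, dmap, shift. rewrite !map_map, map_app. simpl map.
      rewrite var_same.
      - rewrite var_cons2.
        replace ((c2 * (t2 - a), t2 - a) :: map (fun x : R * R => (fst x * (snd x - a), snd x - a)) l2)
          with (newl a ((c2,t2)::l2)) by (unfold newl, dmap, shift; rewrite map_map; reflexivity).
        rewrite var_pos.
        + assert ((t1 - a) * (t2 - a) < 0) by (unfold a; nra).
          assert (e : c1 * (t1 - a) * (c2 * (t2 - a)) = (c1 * c2) * ((t1 - a) * (t2 - a))) by ring.
          destruct (Rlt_dec (c1 * (t1 - a) * (c2 * (t2 - a))) 0); [exfalso|].
          { assert (h0 : 0 < (- (c1 * c2)) * (- ((t1 - a) * (t2 - a)))) by (apply Rmult_lt_0_compat; lra).
            replace ((- (c1 * c2)) * (- ((t1 - a) * (t2 - a)))) with ((c1 * c2) * ((t1 - a) * (t2 - a))) in h0 by ring.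
            lra. }
          lia.
        + intros p Hp. specialize (Hr p Hp). unfold a; lra.
      - intros p Hp. apply in_map_iff in Hp. destruct Hp as [[c t] [<- Hin]]. simpl.
        specialize (Hs _ Hin); specialize (Hl1 _ Hin). simpl in *.
        assert ((t - a) * (t1 - a) > 0) by (unfold a; nra).
        assert (e : c * (t - a) * (c1 * (t1 - a)) = (c * c1) * ((t - a) * (t1 - a))) by ring.
        rewrite e. nra. }
    apply (IH (newl a l) Hvn).
    + rewrite He. destruct l1; discriminate.
    + apply incr_new. rewrite He; auto.
    + apply nz_new; auto. rewrite He. intros p Hp. apply in_app_or in Hp. destruct Hp as [Hp|Hp].
      * specialize (Hl1 _ Hp). unfold a; lra.
      * destruct Hp as [<-|Hp]; [simpl; unfold a; lra|]. specialize (Hr _ Hp). unfold a; lra.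
    + apply (rolle_count (E (shift a l))). intros x; apply E_deriv.
      apply Z_shift; auto.
Qed.

Lemma phi_facts : phi * phi = phi + 1 /\ / phi = phi - 1 /\ 3/2 < phi < 2.
Proof.
  assert (h5 : sqrt 5 * sqrt 5 = 5) by (apply sqrt_sqrt; lra).
  assert (hp : 0 < sqrt 5) by (apply sqrt_lt_R0; lra).
  assert (hb : 2 < sqrt 5 < 3) by (split; nra).
  unfold phi.
  assert (hsq : (1 + sqrt 5) / 2 * ((1 + sqrt 5) / 2) = (1 + sqrt 5) / 2 + 1) by nra.
  split; [exact hsq|]. split; [|lra].
  assert (hne : (1 + sqrt 5) / 2 <> 0) by lra.
  field_simplify_eq; [nra|lra].
Qed.

Definition dot (P v : point) : R := let '(x, y, z) := P in let '(a, b, c) := v in x*a + y*b + z*c.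
Definition nsq (P : point) : R := dot P P.

Lemma dist_dot P v s : dist P (scale s v) = sqrt (nsq P + s*s * nsq v - 2 * s * dot P v).
Proof.
  destruct P as [[x y] z]; destruct v as [[a b] c]. unfold dist, scale, nsq, dot, pt. f_equal. ring.
Qed.

Lemma dots1 k : phi * phi = phi + 1 -> / phi = phi - 1 ->
  map (dot (pt 0 (k*phi) k)) std_dodeca =
  [k*(phi+1); k*(phi-1); -(k*(phi-1)); -(k*(phi+1));
   k*(phi+1); k*(phi-1); -(k*(phi-1)); -(k*(phi+1));
   k*(phi+1); -(k*(phi-1)); k*(phi-1); -(k*(phi+1));
   k*(phi+1); -(k*(phi+1)); k*(phi+1); -(k*(phi+1));
   k*(phi-1); -(k*(phi-1)); k*(phi-1); -(k*(phi-1))].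
Proof.
  intros h1 h2. unfold std_dodeca. simpl map. unfold dot, pt. rewrite h2.
  repeat (apply (f_equal2 (@cons R))); try reflexivity; nsatz.
Qed.

Lemma dots2 rho : / phi = phi - 1 ->
  map (dot (pt 0 0 rho)) std_dodeca =
  [rho; -rho; rho; -rho; rho; -rho; rho; -rho;
   rho*phi; -(rho*phi); rho*phi; -(rho*phi);
   0; 0; 0; 0;
   rho*(phi-1); -(rho*(phi-1)); rho*(phi-1); -(rho*(phi-1))].
Proof.
  intros h2. unfold std_dodeca. simpl map. unfold dot, pt. rewrite h2.
  repeat (apply (f_equal2 (@cons R))); try reflexivity; ring.
Qed.

Lemma nsq_dodeca v : phi * phi = phi + 1 -> / phi = phi - 1 -> In v std_dodeca -> nsq v = 3.
Proof.
  intros h1 h2 H. unfold std_dodeca in H. simpl in H.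
  repeat (destruct H as [<-|H]; [unfold nsq, dot, pt; rewrite ?h2; nsatz|]). destruct H.
Qed.


Lemma sq0 a : a ^ 2 = 0 -> a = 0.
Proof. intro h; destruct (Req_dec a 0); auto; exfalso; apply (pow_nonzero a 2); auto. Qed.

Lemma iso_inj f P Q : isometry f -> f P = f Q -> P = Q.
Proof.
  intros Hf He. assert (H : dist P Q = 0) by (rewrite <- Hf, He; destruct (f Q) as [[a b] c]; unfold dist;
    replace ((a - a) ^ 2 + (b - b) ^ 2 + (c - c) ^ 2) with 0 by ring; apply sqrt_0).
  destruct P as [[x1 y1] z1]; destruct Q as [[x2 y2] z2]. unfold dist in H.
  pose proof (pow2_ge_0 (x1-x2)); pose proof (pow2_ge_0 (y1-y2)); pose proof (pow2_ge_0 (z1-z2)).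
  apply sqrt_eq_0 in H; [|lra].
  assert (hx : (x1 - x2)^2 = 0) by lra. assert (hy : (y1 - y2)^2 = 0) by lra. assert (hz : (z1 - z2)^2 = 0) by lra.
  apply sq0 in hx, hy, hz.
  assert (x1 = x2) by lra. assert (y1 = y2) by lra. assert (z1 = z2) by lra. subst; auto.
Qed.

Lemma ps_eq f s rho lam P : isometry f -> nsq P = rho * rho ->
  power_sum (dodeca_vertices f s) lam (f P) =
  sumR (map (fun w => exp (ln (sqrt (rho*rho + s*s*3 - 2*s*w)) * lam)) (map (dot P) std_dodeca)).
Proof.
  intros Hf HP. destruct phi_facts as [h1 [h2 _]].
  unfold power_sum, dodeca_vertices. rewrite !map_map. f_equal. apply map_ext_in.
  intros v Hv. rewrite Hf, dist_dot, HP, (nsq_dodeca v h1 h2 Hv). unfold Rpower. rewrite Rmult_comm. reflexivity.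
Qed.

Lemma centre_dist f P rho : isometry f -> 0 <= rho -> nsq P = rho * rho -> dist (f P) (dodeca_centre f) = rho.
Proof.
  intros Hf Hr HP. unfold dodeca_centre. rewrite Hf.
  replace origin with (scale 0 origin) by (unfold origin, scale, pt; f_equal; f_equal; ring).
  rewrite dist_dot, HP. unfold nsq, dot, origin, pt.
  replace (rho * rho + 0 * 0 * (0 * 0 + 0 * 0 + 0 * 0) - 2 * 0 * (let '(x, y, z) := P in x * 0 + y * 0 + z * 0))
    with (rho * rho) by (destruct P as [[x y] z]; ring).
  apply sqrt_square; auto.
Qed.

Lemma dist_self P : dist P P = 0.
Proof. destruct P as [[a b] c]; unfold dist;
    replace ((a - a) ^ 2 + (b - b) ^ 2 + (c - c) ^ 2) with 0 by ring; apply sqrt_0. Qed.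

Lemma not_vertex f s rho P ws : isometry f -> nsq P = rho * rho ->
  map (dot P) std_dodeca = ws -> (forall w, In w ws -> rho*rho + s*s*3 - 2*s*w > 0) ->
  ~ In (f P) (dodeca_vertices f s).
Proof.
  intros Hf HP Hws Hpos Hin. destruct phi_facts as [h1 [h2 _]].
  unfold dodeca_vertices in Hin. apply in_map_iff in Hin. destruct Hin as [v [Hv Hin]].
  apply iso_inj in Hv; auto.
  assert (Hd : dist P (scale s v) = 0) by (rewrite Hv; apply dist_self).
  rewrite dist_dot, HP, (nsq_dodeca v h1 h2 Hin) in Hd.
  assert (Hw : In (dot P v) ws) by (rewrite <- Hws; apply in_map; auto).
  specialize (Hpos _ Hw). apply sqrt_eq_0 in Hd; lra.
Qed.

Theorem mainTheorem8 :
  forall (f : point -> point) (s rho : R),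
    isometry f -> 0 < s -> 0 < rho ->
    forall l : list R, NoDup l ->
      (forall lam, In lam l ->
         const_on_sphere_minus (dodeca_vertices f s) (dodeca_centre f) rho lam) ->
      (length l <= 9)%nat.
Proof.
  intros f s rho Hf Hs Hr l HN Hc.
  destruct phi_facts as [h1 [h2 [hpl hpu]]].
  set (q := sqrt (phi*phi+1)).
  assert (hq : q * q = phi*phi+1) by (apply sqrt_sqrt; nra).
  assert (hq0 : 0 < q) by (apply sqrt_lt_R0; nra).
  set (k := rho / q).
  assert (hk : k * q = rho) by (unfold k; field; lra).
  assert (hk0 : 0 < k) by (unfold k; apply Rdiv_lt_0_compat; lra).
  assert (hqphi : phi < q) by nra.
  assert (hqphi1 : q < phi + 1) by nra.
  assert (hq1 : 1 < q) by nra.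
  set (P1 := pt 0 (k*phi) k). set (P2 := pt 0 0 rho).
  assert (hn1 : nsq P1 = rho * rho) by (unfold P1, nsq, dot, pt; rewrite <- hk;
    replace (0 * 0 + k * phi * (k * phi) + k * k) with (k*k*(phi*phi+1)) by ring; rewrite <- hq; ring).
  assert (hn2 : nsq P2 = rho * rho) by (unfold P2, nsq, dot, pt; ring).
  set (tw := fun w => ln (sqrt (rho*rho + s*s*3 - 2*s*w))).
  set (W1 := k*(phi+1)). set (W2 := k*(phi-1)).
  assert (o1 : W1 < rho*phi) by (unfold W1; rewrite <- hk; nra).
  assert (o2 : rho < W1) by (unfold W1; rewrite <- hk; nra).
  assert (o3 : rho*(phi-1) < rho) by nra.
  assert (o4 : W2 < rho*(phi-1)) by (unfold W2; rewrite <- hk; nra).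
  assert (o5 : 0 < W2) by (unfold W2; nra).
  assert (Dpos : forall w, w <= rho*phi -> rho*rho + s*s*3 - 2*s*w > 0).
  { intros w Hw. assert (rho*rho + s*s*3 - 2*s*(rho*phi) > 0).
    { assert (e : rho*rho + s*s*3 - 2*s*(rho*phi) = (rho - s*phi)*(rho - s*phi) + s*s*(2 - phi)) by (replace (s*s*(2-phi)) with (s*s*(3 - phi*phi)) by (rewrite h1; ring); ring).
      rewrite e. assert (0 <= (rho - s*phi)*(rho - s*phi)) by (pose proof (Rle_0_sqr (rho - s*phi)); unfold Rsqr in *; lra).
      assert (0 < s*s*(2-phi)) by (apply Rmult_lt_0_compat; [apply Rmult_lt_0_compat|]; lra). lra. }
    nra. }
  assert (twlt : forall a b, a <= rho*phi -> b < a -> tw a < tw b).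
  { intros a b Ha Hb. unfold tw. apply ln_increasing.
    - apply sqrt_lt_R0. apply Dpos; auto.
    - apply sqrt_lt_1_alt. split; [left; apply Dpos; auto|]. nra. }
  set (lst := [(-2, tw (rho*phi)); (5, tw W1); (-4, tw rho); (-2, tw (rho*(phi-1))); (5, tw W2);
               (-4, tw 0); (5, tw (-W2)); (-2, tw (-(rho*(phi-1)))); (-4, tw (-rho)); (5, tw (-W1));
               (-2, tw (-(rho*phi)))]).
  assert (Hvar : var lst = 8%nat).
  { unfold lst. rewrite !var_cons2. simpl var.
    repeat match goal with |- context [Rlt_dec ?x 0] => destruct (Rlt_dec x 0); try (exfalso; lra) end.
    reflexivity. }
  assert (Hincr : incr lst).
  { unfold lst; simpl. repeat split; apply twlt; lra. }
  assert (Hnz : nz lst).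
  { intros p Hp. unfold lst in Hp. simpl in Hp. repeat (destruct Hp as [<-|Hp]; [simpl; lra|]). destruct Hp. }
  assert (Hzero : forall lam, In lam l -> E lst lam = 0).
  { intros lam Hl. destruct (Hc lam Hl) as [c Hcc].
    assert (pos1 : forall w, In w (map (dot P1) std_dodeca) -> rho*rho + s*s*3 - 2*s*w > 0).
    { unfold P1; rewrite dots1 by auto. intros w Hw; apply Dpos; simpl in Hw.
      repeat (destruct Hw as [<-|Hw]; [fold W1 W2; lra|]); destruct Hw. }
    assert (pos2 : forall w, In w (map (dot P2) std_dodeca) -> rho*rho + s*s*3 - 2*s*w > 0).
    { unfold P2; rewrite dots2 by auto. intros w Hw; apply Dpos; simpl in Hw.
      repeat (destruct Hw as [<-|Hw]; [nra|]); destruct Hw. }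
    assert (e1 := Hcc (f P1) (centre_dist f P1 rho Hf (Rlt_le _ _ Hr) hn1)
      (not_vertex f s rho P1 _ Hf hn1 eq_refl pos1)).
    assert (e2 := Hcc (f P2) (centre_dist f P2 rho Hf (Rlt_le _ _ Hr) hn2)
      (not_vertex f s rho P2 _ Hf hn2 eq_refl pos2)).
    rewrite (ps_eq f s rho lam P1 Hf hn1) in e1. rewrite (ps_eq f s rho lam P2 Hf hn2) in e2. unfold P1 in e1; unfold P2 in e2. rewrite dots1 in e1 by auto. rewrite dots2 in e2 by auto.
    simpl in e1, e2. unfold lst; simpl. fold (tw W1) (tw W2) in *.
    change (ln (sqrt (rho * rho + s * s * 3 - 2 * s * ?w))) with (tw w) in e1, e2.
    fold W1 W2 in e1. lra. }
  destruct (Nat.le_gt_cases (length l) 9) as [H|H]; auto.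
  exfalso. apply (descartes 8 lst Hvar); [discriminate|auto|auto|].
  apply (Z_sub _ 9 l HN); [lia|auto].
Qed.
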